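(* Let $\ell$ be a prime, $L$ a finite extension of $\mathbb Q_\ell$, $\tau$ a field automorphism of $L$ of order $2$, $L^\tau$ its fixed field, $\lambda$ a uniformizer of $L^\tau$, $v_\lambda$ the valuation on $\overline{\mathbb Q_\ell}$ with $v_\lambda(\lambda)=1$, and $f$ the inertia degree of $L^\tau$ over $\mathbb Q_\ell$. Let $C=\{x\in\mathcal O_L^\times:x\tau(x)=1\}$ and $C(n)=\{x\in C:v_\lambda(x-1)\ge n\}$ for $n\ge 0$. If $\ell\neq2$, then $|C(0)/C(1)|=2\ell^f$ if $L/L^\tau$ is ramified and $|C(0)/C(1)|=\ell^f+1$ if $L/L^\tau$ is unramified. If $\ell=2$ and $0\le n\le v_\lambda(2)$, then $|C(n)/C(n+1)|\le 4^f$. *)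

(* Defs.v *)
From HB Require Import structures.
From mathcomp Require Import all_boot all_order all_algebra.
Set Implicit Arguments. Unset Strict Implicit. Unset Printing Implicit Defensive.
Import Order.TTheory GRing.Theory Num.Theory.
Local Open Scope ring_scope.

Definition num_classes (T : Type) (A : T -> Prop) (E : T -> T -> Prop)
    (k : nat) : Prop :=
  exists r : 'I_k -> T,
    [/\ forall i, A (r i),
        forall i j, E (r i) (r j) -> i = j
      & forall a, A a -> exists i, E a (r i)].

Section Valuation.
Variables (L : fieldType) (w : L -> int).

(* w is a normalized discrete valuation on L (w 0 is irrelevant: +oo) *)
Definition dvaluation : Prop :=
  [/\ forall x y, x != 0 -> y != 0 -> w (x * y) = w x + w y,
      forall x y, x != 0 -> y != 0 -> x + y != 0 ->
        w x <= w (x + y) \/ w y <= w (x + y)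
    & exists pi : L, pi != 0 /\ w pi = 1].

Definition vge (x : L) (n : int) : Prop := x = 0 \/ n <= w x.

Definition vcomplete : Prop :=
  forall a : nat -> L,
    (forall N : int, exists M : nat, forall m k : nat,
        (M <= m)%N -> (M <= k)%N -> vge (a m - a k) N) ->
    exists l : L, forall N : int, exists M : nat, forall m : nat,
        (M <= m)%N -> vge (a m - l) N.

Definition residue_card (k : nat) : Prop :=
  num_classes (fun x => vge x 0) (fun x y => vge (x - y) 1) k.

(* (L, w) is a finite extension of Q_ell with its normalized valuation:
   a complete discretely valued field of characteristic 0 whose residue
   field is finite of characteristic ell. *)
Definition finite_ext_Ql (ell : nat) : Prop :=
  [/\ dvaluation, vcomplete, (forall n : nat, n.+1%:R != 0 :> L),
      0 < w ell%:R & exists k, residue_card k].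

End Valuation.

Section Fixed.
Variables (L : fieldType) (w : L -> int) (tau : L -> L).

Definition fixedF (x : L) : Prop := tau x = x.

Definition uniformizer_fixed (lam : L) : Prop :=
  [/\ fixedF lam, lam != 0, 0 < w lam &
      forall x, fixedF x -> x != 0 -> 0 < w x -> w lam <= w x].

Definition inertia_deg_fixed (ell f : nat) : Prop :=
  num_classes (fun x => fixedF x /\ vge w x 0)
              (fun x y => vge w (x - y) 1) (ell ^ f).

(* C(n) = { x in O_L^x : x tau(x) = 1, v_lam(x - 1) >= n },
   where v_lam = w / w(lam) *)
Definition Cn (lam : L) (n : nat) (x : L) : Prop :=
  [/\ x != 0, w x = 0, x * tau x = 1 & vge w (x - 1) (n%:Z * w lam)].

Definition Cquot_card (lam : L) (n k : nat) : Prop :=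
  num_classes (Cn lam n) (fun x y => Cn lam n.+1 (x / y)) k.

End Fixed.

(* Main.v *)
Require Import Defs.
From HB Require Import structures.
From mathcomp Require Import all_boot all_order all_algebra.
From mathcomp Require Import zify ring lra.
From Stdlib Require Import ClassicalEpsilon Classical.
Set Implicit Arguments. Unset Strict Implicit. Unset Printing Implicit Defensive.
Import Order.TTheory GRing.Theory Num.Theory.
Local Open Scope ring_scope.

Section Count.
Variables (T : Type) (A : T -> Prop) (E : T -> T -> Prop) (I : finType) (g : T -> I).

Lemma classes_count (S : {set I}) :
  (forall a b, A a -> A b -> (E a b <-> g a = g b)) ->
  (forall a, A a -> g a \in S) ->
  (forall s, s \in S -> exists a, A a /\ g a = s) ->
  num_classes A E #|S|.
Proof.
move=> HE HS Hsurj.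
pose r (k : 'I_#|S|) := proj1_sig (constructive_indefinite_description _
   (Hsurj _ (enum_valP k))).
have rP k : A (r k) /\ g (r k) = enum_val k.
  by rewrite /r; case: (constructive_indefinite_description _ _).
exists r; split.
- by move=> i; case: (rP i).
- move=> i j; case: (rP i) => Ai gi; case: (rP j) => Aj gj.
  by move/(HE _ _ Ai Aj); rewrite gi gj => /enum_val_inj.
- move=> a Aa; have Sa := HS a Aa.
  exists (enum_rank_in Sa (g a)).
  case: (rP (enum_rank_in Sa (g a))) => Ar gr.
  by apply/(HE _ _ Aa Ar); rewrite gr enum_rankK_in.
Qed.

Lemma image_set : exists S : {set I},
  (forall a, A a -> g a \in S) /\ (forall s, s \in S -> exists a, A a /\ g a = s).
Proof.
pose b s := if excluded_middle_informative (exists a, A a /\ g a = s) then true else false.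
exists [set s | b s]; split.
- move=> a Aa; rewrite inE /b.
  by case: excluded_middle_informative => // [[]]; exists a.
- move=> s; rewrite inE /b.
  by case: excluded_middle_informative.
Qed.

Lemma classes_bound :
  (forall a b, A a -> A b -> (E a b <-> g a = g b)) ->
  exists k, num_classes A E k /\ (k <= #|I|)%N.
Proof.
move=> HE; have [S [H1 H2]] := image_set.
by exists #|S|; split; [apply: classes_count|apply: max_card].
Qed.

End Count.

Section Main.
Variables (ell : nat) (L : fieldType) (w : L -> int)
    (tau : {rmorphism L -> L}) (lam : L) (f : nat).
Hypothesis Hp : prime ell.
Hypothesis Hdv : dvaluation w.
Hypothesis Hcomp : vcomplete w.
Hypothesis Hchar : forall n : nat, n.+1%:R != 0 :> L.
Hypothesis Hell : 0 < w ell%:R.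
Hypothesis Hinv : involutive tau.
Hypothesis Hnt : exists x : L, tau x != x.
Hypothesis Hu : uniformizer_fixed w tau lam.
Hypothesis Hf : inertia_deg_fixed w tau ell f.

Local Notation vg := (vge w).

Lemma wM x y : x != 0 -> y != 0 -> w (x * y) = w x + w y.
Proof. by case: Hdv => H _ _; apply: H. Qed.

Lemma w1 : w 1 = 0.
Proof. have := wM (oner_neq0 L) (oner_neq0 L); rewrite mulr1; set a := w 1; lia. Qed.

Lemma wN1 : w (-1) = 0.
Proof.
have h : (-1 : L) != 0 by rewrite oppr_eq0 oner_eq0.
have := wM h h; rewrite mulrNN mulr1 w1; lia.
Qed.

Lemma wN x : w (- x) = w x.
Proof.
have [->|x0] := eqVneq x 0; first by rewrite oppr0.
have h : (-1 : L) != 0 by rewrite oppr_eq0 oner_eq0.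
by rewrite -mulN1r wM // wN1 add0r.
Qed.

Lemma wV x : x != 0 -> w x^-1 = - w x.
Proof.
move=> x0; have := wM x0 (invr_neq0 x0); rewrite mulfV // w1; lia.
Qed.

Lemma wX x n : x != 0 -> w (x ^+ n) = (n%:Z * w x)%R.
Proof.
move=> x0; elim: n => [|n IH]; first by rewrite expr0 w1 mul0r.
rewrite exprS wM ?expf_neq0 // IH; lia.
Qed.

Lemma wdiv x y : x != 0 -> y != 0 -> w (x / y) = w x - w y.
Proof. by move=> x0 y0; rewrite wM ?invr_neq0 // wV. Qed.

Lemma wD_ge x y : x != 0 -> y != 0 -> x + y != 0 ->
  Order.min (w x) (w y) <= w (x + y).
Proof.
case: Hdv => _ H _ x0 y0 s0; case: (H x y x0 y0 s0) => h.
  by rewrite ge_min h.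
by rewrite ge_min h orbT.
Qed.

Lemma vge_le x n m : vg x n -> m <= n -> vg x m.
Proof. by move=> [->|h] mn; [left|right; apply: le_trans h]. Qed.

Lemma vge0 n : vg 0 n.
Proof. by left. Qed.

Lemma vgeN x n : vg x n -> vg (- x) n.
Proof. by move=> [->|h]; [left; rewrite oppr0|right; rewrite wN]. Qed.

Lemma vgeNE x n : vg (- x) n <-> vg x n.
Proof. by split=> /vgeN //; rewrite opprK. Qed.

Lemma vgeD x y n : vg x n -> vg y n -> vg (x + y) n.
Proof.
move=> [->|hx]; first by rewrite add0r.
move=> [->|hy]; first by rewrite addr0; right.
have [s0|s0] := eqVneq (x + y) 0; first by left.
have [->|x0] := eqVneq x 0; first by rewrite add0r; right.
have [->|y0] := eqVneq y 0; first by rewrite addr0; right.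
right; apply: le_trans (wD_ge x0 y0 s0); by rewrite le_min hx hy.
Qed.

Lemma vgeB x y n : vg x n -> vg y n -> vg (x - y) n.
Proof. by move=> hx hy; apply: vgeD => //; apply: vgeN. Qed.

Lemma vgeM x y n m : vg x n -> vg y m -> vg (x * y) (n + m).
Proof.
move=> [->|hx]; first by rewrite mul0r; left.
move=> [->|hy]; first by rewrite mulr0; left.
have [->|x0] := eqVneq x 0; first by rewrite mul0r; left.
have [->|y0] := eqVneq y 0; first by rewrite mulr0; left.
right; rewrite wM //; lia.
Qed.

Lemma vgeMl x y n m : vg x n -> vg y m -> (0 <= m) -> vg (x * y) n.
Proof. move=> hx hy m0; apply: vge_le (vgeM hx hy) _; lia. Qed.

Lemma vgeMr x y n m : vg x m -> vg y n -> (0 <= m) -> vg (x * y) n.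
Proof. move=> hx hy m0; rewrite mulrC; exact: vgeMl hy hx m0. Qed.

Lemma vge_unitM x y n : x != 0 -> w x = 0 -> vg (x * y) n <-> vg y n.
Proof.
move=> x0 wx; split.
  move=> [|h]; first by move/eqP; rewrite mulf_eq0 (negbTE x0) /= => /eqP ->; left.
  have [->|y0] := eqVneq y 0; first by left.
  by right; move: h; rewrite wM // wx add0r.
by move=> h; apply: (@vgeMr x y n 0) => //; right; rewrite wx.
Qed.

Lemma vge_eq0 x : (forall N, vg x N) -> x = 0.
Proof.
move=> h; have [//|x0] := eqVneq x 0.
case: (h (w x + 1)) => [//|]; lia.
Qed.

Lemma w_strict x y : x != 0 -> y != 0 -> w x < w y -> w (x + y) = w x.
Proof.
move=> x0 y0 lt.
have s0 : x + y != 0.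
  apply/negP=> /eqP h; have e : y = - x.
    by apply/eqP; rewrite -addr_eq0 addrC h.
  by move: lt; rewrite e wN ltxx.
have h1 : w x <= w (x + y).
  have := wD_ge x0 y0 s0; rewrite ge_min => /orP [] h //; lia.
have ny0 : - y != 0 by rewrite oppr_eq0.
have e : (x + y) + (- y) = x by rewrite addrK.
have := wD_ge s0 ny0; rewrite e wN => /(_ x0); rewrite ge_min => /orP [] h2; lia.
Qed.

Lemma vge1 : vg 1 0.
Proof. by right; rewrite w1. Qed.

Lemma vgeMO x y : vg x 0 -> vg y 0 -> vg (x * y) 0.
Proof. by move=> hx hy; apply: (@vgeMl _ _ _ 0). Qed.

Lemma vge_nat n : vg (n%:R) 0.
Proof.
elim: n => [|n IH]; first by left.
rewrite -addn1 natrD; apply: vgeD => //; right; rewrite w1.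
done.
Qed.


Lemma binom_rem t m : vg t 0 ->
  exists Q, vg Q 0 /\ (1 + t) ^+ m - 1 - m%:R * t = t ^+ 2 * Q.
Proof.
move=> ht; elim: m => [|m [Q [hQ e]]].
  by exists 0; split; [left|rewrite expr0 mul0r mulr0 subrr sub0r oppr0].
exists ((1 + t) * Q + m%:R); split.
  apply: vgeD => //; last exact: vge_nat.
  by apply: vgeMO => //; apply: vgeD => //; exact: vge1.
have e' : (1 + t) ^+ m = t ^+ 2 * Q + 1 + m%:R * t.
  by rewrite -e; ring.
rewrite exprS e' -[m.+1]addn1 natrD; ring.
Qed.

Lemma vgeX x y N m : vg x 0 -> vg y 0 -> vg (x - y) N -> vg (x ^+ m - y ^+ m) N.
Proof.
move=> hx hy hxy; elim: m => [|m IH]; first by rewrite !expr0 subrr; left.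
have hym : vg (y ^+ m) 0.
  elim: m {IH} => [|m IHm]; first by rewrite expr0; exact: vge1.
  by rewrite exprS; apply: vgeMO.
have -> : x ^+ m.+1 - y ^+ m.+1 = x * (x ^+ m - y ^+ m) + (x - y) * y ^+ m.
  by rewrite !exprS; ring.
apply: vgeD => //; first by apply: (@vgeMr _ _ _ 0).
by apply: (@vgeMl _ _ _ 0).
Qed.

Lemma unit1 t : vg t 1 -> 1 + t != 0 /\ w (1 + t) = 0.
Proof.
move=> [->|ht]; first by rewrite addr0 w1 oner_eq0.
have [->|t0] := eqVneq t 0; first by rewrite addr0 w1 oner_eq0.
have h : w 1 < w t by rewrite w1; lia.
have e := w_strict (oner_neq0 L) t0 h.
split; last by rewrite e w1.
apply/negP; rewrite addrC addr_eq0 => /eqP et; move: ht; rewrite et wN1; lia.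
Qed.

Lemma unitV x : x != 0 -> w x = 0 -> x^-1 != 0 /\ w x^-1 = 0.
Proof. by move=> x0 wx; rewrite invr_neq0 // wV // wx. Qed.

Section Seq.
Variables (m : nat) (a : L).
Hypotheses (m0 : (m%:R : L) != 0) (wm : w m%:R = 0) (ha : vg (a - 1) 1).

Fixpoint ys k : L := match k with
  | 0 => 1
  | k'.+1 => ys k' * (1 + (a / ys k' ^+ m - 1) / m%:R) end.


Lemma ys_inv k : [/\ ys k != 0, w (ys k) = 0 & vg (ys k ^+ m - a) k.+1%:Z].
Proof.
elim: k => [|k [y0 wy hy]].
  split; [exact: oner_neq0|exact: w1|].
  by rewrite expr1n -opprB; apply: vgeN.
rewrite /=; set y := ys k in y0 wy hy *.
set t := (a / y ^+ m - 1) / m%:R.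
have ym0 : y ^+ m != 0 by rewrite expf_neq0.
have wym : w (y ^+ m) = 0 by rewrite wX // wy mulr0.
have [yi0 wyi] := unitV ym0 wym.
have [mi0 wmi] := unitV m0 wm.
have ht : vg t k.+1%:Z.
  have -> : t = (a - y ^+ m) * (y ^+ m)^-1 * (m%:R)^-1.
    by rewrite /t [in RHS]mulrBl mulfV.
  apply: (@vgeMl _ _ _ 0); last by []; last by right; rewrite wmi.
  apply: (@vgeMl _ _ _ 0); last by []; last by right; rewrite wyi.
  by rewrite -opprB; apply: vgeN.
have ht1 : vg t 1 by apply: vge_le ht _; lia.
have ht0 : vg t 0 by apply: vge_le ht _; lia.
have [t10 wt1] := unit1 ht1.
split; first by rewrite mulf_neq0.
  by rewrite wM // wy wt1.
have emt : m%:R * t = a / y ^+ m - 1 by rewrite /t mulrC divfK.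
have ea : y ^+ m * (1 + m%:R * t) = a.
  by rewrite emt addrC subrK mulrC divfK.
have [Q [hQ eQ]] := binom_rem m ht0.
have -> : (y * (1 + t)) ^+ m - a = y ^+ m * (t ^+ 2 * Q).
  by rewrite exprMn -ea -eQ; ring.
apply: (@vgeMr _ _ _ 0); [by right; rewrite wym| |by []].
apply: (@vgeMl _ _ _ 0); last by []; last by [].
rewrite expr2; apply: vge_le (vgeM ht ht) _; lia.
Qed.

Lemma ys_cauchy M n : (M <= n)%N -> vg (ys n - ys M) M.+1%:Z.
Proof.
elim: n => [|n IH]; first by rewrite leqn0 => /eqP ->; rewrite subrr; left.
rewrite leq_eqVlt => /orP [/eqP ->|]; first by rewrite subrr; left.
rewrite ltnS => hMn; have h := IH hMn.
have -> : ys n.+1 - ys M = (ys n.+1 - ys n) + (ys n - ys M) by rewrite addrA subrK.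
apply: vgeD => //.
have [y0 wy _] := ys_inv n.
rewrite /= mulrDr mulr1 addrC addKr.
apply: (@vgeMr _ _ _ 0); last by []; first by right; rewrite wy.
have [_ _ hy] := ys_inv n.
set y := ys n in y0 wy hy *.
have ym0 : y ^+ m != 0 by rewrite expf_neq0.
have wym : w (y ^+ m) = 0 by rewrite wX // wy mulr0.
have [yi0 wyi] := unitV ym0 wym.
have [mi0 wmi] := unitV m0 wm.
have -> : (a / y ^+ m - 1) / m%:R = (a - y ^+ m) * (y ^+ m)^-1 * (m%:R)^-1.
  by rewrite [in RHS]mulrBl mulfV.
apply: (@vge_le _ n.+1%:Z); last by lia.
apply: (@vgeMl _ _ _ 0); last by []; last by right; rewrite wmi.
apply: (@vgeMl _ _ _ 0); last by []; last by right; rewrite wyi.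
by rewrite -opprB; apply: vgeN.
Qed.

Lemma hensel_seq : exists l, l ^+ m = a.
Proof.
have [l hl] : exists l, forall N : int, exists M : nat, forall k : nat,
    (M <= k)%N -> vge w (ys k - l) N.
  apply: Hcomp => N; exists `|N|%N => i j hi hj.
  have e : ys i - ys j = (ys i - ys `|N|%N) - (ys j - ys `|N|%N).
    by rewrite opprB addrA subrK.
  rewrite e; apply: vge_le (vgeB (ys_cauchy hi) (ys_cauchy hj)) _; lia.
exists l; apply/eqP; rewrite -subr_eq0; apply/eqP; apply: vge_eq0 => N.
have [M hM] := hl (Order.max N 0).
set k := maxn M `|N|%N.
have hk : vg (ys k - l) (Order.max N 0) by apply: hM; rewrite leq_maxl.
have [y0 wy hy] := ys_inv k.
have hy0 : vg (ys k) 0 by right; rewrite wy.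
have hl0 : vg l 0.
  have -> : l = ys k - (ys k - l) by rewrite opprB addrC subrK.
  apply: vgeB => //; apply: vge_le hk _; lia.
have e : l ^+ m - a = - (ys k ^+ m - l ^+ m) + (ys k ^+ m - a).
  by rewrite opprB addrA subrK.
rewrite e; apply: vgeD; first apply: vgeN.
  by apply: vge_le (vgeX m hy0 hl0 hk) _; lia.
apply: vge_le hy _.
have : (`|N|%N <= k)%N by rewrite leq_maxr.
lia.
Qed.

End Seq.

Lemma hensel m a : (m%:R : L) != 0 -> w m%:R = 0 -> vg (a - 1) 1 ->
  exists y, y ^+ m = a.
Proof. by move=> m0 wm ha; apply: hensel_seq. Qed.


Lemma ell_gt1 : (1 < ell)%N.
Proof. exact: prime_gt1. Qed.

Lemma nat_neq0 n : (0 < n)%N -> (n%:R : L) != 0.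
Proof. by case: n => // n _; apply: Hchar. Qed.

Lemma w_lin k : w ((ell * k).+1)%:R = 0.
Proof.
have [->|k0] := eqVneq k 0%N; first by rewrite muln0 w1.
rewrite -addn1 natrD addrC natrM.
have l0 : (ell%:R : L) != 0 by apply: nat_neq0; apply: prime_gt0.
have kk0 : (k%:R : L) != 0 by apply: nat_neq0; rewrite lt0n.
have lk0 : (ell%:R * k%:R : L) != 0 by rewrite mulf_neq0.
have h : w 1 < w (ell%:R * k%:R : L).
  rewrite wM // w1; have := vge_nat k; case=> [/eqP|]; first by rewrite (negbTE kk0).
  lia.
by rewrite w_strict ?oner_neq0 // w1.
Qed.

Definition ee := `|w ell%:R|%N.
Definition m0 := (ell * ee).+1.

Lemma ee_eq : (ee%:Z) = w ell%:R.
Proof. rewrite /ee; lia. Qed.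

Lemma Ochar x : vg x 0 <-> exists y, y ^+ m0 = 1 + ell%:R * x ^+ m0.
Proof.
have l0 : (ell%:R : L) != 0 by apply: nat_neq0; apply: prime_gt0.
split=> [hx|[y hy]].
  apply: hensel; first exact: Hchar.
    exact: w_lin.
  rewrite addrAC subrr add0r; apply: (@vgeMl _ _ _ 0) => //.
    by right; lia.
  elim: m0 => [|n IH]; first by rewrite expr0; exact: vge1.
  by rewrite exprS; apply: vgeMO.
have [->|x0] := eqVneq x 0; first by left.
case: (lerP 0 (w x)) => [h|h]; first by right.
exfalso.
have xm0 : x ^+ m0 != 0 by rewrite expf_neq0.
have lx0 : ell%:R * x ^+ m0 != 0 by rewrite mulf_neq0.
have wlx : w (ell%:R * x ^+ m0) = w ell%:R + m0%:Z * w x by rewrite wM // wX.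
have hm : (m0%:Z) = (ell%:Z * ee%:Z + 1) by rewrite /m0; lia.
have hl : (2 <= ell%:Z) by have := ell_gt1; lia.
have ee0 : 0 < ee%:Z by rewrite ee_eq.
have hneg : w (ell%:R * x ^+ m0) < w 1.
  rewrite wlx w1 -ee_eq hm.
  have : (ell%:Z * ee%:Z + 1) * w x <= - (ell%:Z * ee%:Z + 1) by nia.
  nia.
have ws : w (1 + ell%:R * x ^+ m0) = w (ell%:R * x ^+ m0).
  by rewrite addrC w_strict // oner_neq0.
have s0 : 1 + ell%:R * x ^+ m0 != 0.
  apply/negP; rewrite addrC addr_eq0 => /eqP e0; move: hneg; rewrite e0 wN1 w1.
  by rewrite ltxx.
have y0 : y != 0.
  by apply/negP => /eqP y0; move: hy s0; rewrite y0 expr0n /= => <-; rewrite eqxx.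
have := ws; rewrite -hy wX // wlx -ee_eq hm => e.
have hd : (ell%:Z * ee%:Z + 1) * (w y - w x) = ee%:Z by lia.
case: (lerP (w y - w x) 0) => hc; nia.
Qed.


Lemma tauO x : vg x 0 -> vg (tau x) 0.
Proof.
move=> /Ochar [y hy]; apply/Ochar; exists (tau y).
by rewrite -rmorphXn hy rmorphD rmorph1 rmorphM rmorph_nat rmorphXn.
Qed.

Lemma tau_neq0 x : x != 0 -> tau x != 0.
Proof. by rewrite fmorph_eq0. Qed.

Lemma tau_unit x : x != 0 -> w x = 0 -> w (tau x) = 0.
Proof.
move=> x0 wx.
have t0 := tau_neq0 x0.
have h1 : vg (tau x) 0 by apply: tauO; right; rewrite wx.
have h2 : vg (tau x^-1) 0 by apply: tauO; right; rewrite wV // wx.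
rewrite fmorphV in h2.
case: h1 => [/eqP|h1]; first by rewrite (negbTE t0).
case: h2 => [/eqP|h2]; first by rewrite invr_eq0 (negbTE t0).
rewrite wV // oppr_ge0 in h2.
by apply/eqP; rewrite eq_le h2.
Qed.

Lemma w_decomp pi x : pi != 0 -> w pi = 1 -> x != 0 -> 0 <= w x ->
  x = (x / pi ^+ `|w x|%N) * pi ^+ `|w x|%N /\ w (x / pi ^+ `|w x|%N) = 0.
Proof.
move=> p0 wp x0 hx; have pn0 : pi ^+ `|w x|%N != 0 by rewrite expf_neq0.
split; first by rewrite divfK.
rewrite wdiv // wX // wp; lia.
Qed.

Lemma wT x : w (tau x) = w x.
Proof.
have [->|x0] := eqVneq x 0; first by rewrite rmorph0.
case: Hdv => _ _ [pi [p0 wp]].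
have tp0 := tau_neq0 p0.
pose k := w (tau pi).
have G : forall z, z != 0 -> 0 <= w z -> w (tau z) = w z * k.
  move=> z z0 hz; have [ez wu] := w_decomp p0 wp z0 hz.
  have u0 : z / pi ^+ `|w z|%N != 0 by rewrite mulf_neq0 ?invr_neq0 ?expf_neq0.
  rewrite {1}ez rmorphM rmorphXn wM ?tau_neq0 ?expf_neq0 // tau_unit // wX //.
  rewrite /k; lia.
have k1 : k = 1.
  have k0 : 0 <= k.
    have : vg (tau pi) 0 by apply: tauO; right; rewrite wp.
    by case=> [/eqP|//]; rewrite (negbTE tp0).
  have := G _ tp0 k0; rewrite Hinv wp -/k => e; nia.
case: (lerP 0 (w x)) => hx; first by rewrite G // k1 mulr1.
have xi0 : x^-1 != 0 by rewrite invr_neq0.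
have := G _ xi0; rewrite wV // k1 mulr1 fmorphV wV ?tau_neq0 //.
move=> h; have := h ltac:(lia); by move/eqP; rewrite eqr_opp => /eqP.
Qed.

Lemma vgT x n : vg (tau x) n <-> vg x n.
Proof.
rewrite /vge wT; split=> [[h|h]|[h|h]]; [|by right|by left; rewrite h rmorph0|by right].
by left; apply: (fmorph_inj tau); rewrite h rmorph0.
Qed.


Local Notation fx := (fixedF tau).
Local Notation d := (w lam).

Lemma fxE x : fx x = (tau x = x). Proof. by []. Qed.
Lemma fx0 : fx 0. Proof. exact: rmorph0. Qed.
Lemma fx1 : fx 1. Proof. exact: rmorph1. Qed.
Lemma fxD x y : fx x -> fx y -> fx (x + y).
Proof. by rewrite /fixedF rmorphD => -> ->. Qed.
Lemma fxN x : fx x -> fx (- x).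
Proof. by rewrite /fixedF rmorphN => ->. Qed.
Lemma fxB x y : fx x -> fx y -> fx (x - y).
Proof. by move=> hx hy; apply: fxD => //; apply: fxN. Qed.
Lemma fxM x y : fx x -> fx y -> fx (x * y).
Proof. by rewrite /fixedF rmorphM => -> ->. Qed.
Lemma fxV x : fx x -> fx x^-1.
Proof. by rewrite /fixedF fmorphV => ->. Qed.
Lemma fxX x n : fx x -> fx (x ^+ n).
Proof. by rewrite /fixedF rmorphXn => ->. Qed.
Lemma fx_nat n : fx n%:R.
Proof. exact: rmorph_nat. Qed.

Lemma lam_fx : fx lam. Proof. by case: Hu. Qed.
Lemma lam0 : lam != 0. Proof. by case: Hu. Qed.
Lemma d_gt0 : 0 < d. Proof. by case: Hu. Qed.
Lemma d_min x : fx x -> x != 0 -> 0 < w x -> d <= w x.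
Proof. by case: Hu => _ _ _; apply. Qed.

Lemma fx_mult_nat (n : nat) x : fx x -> x != 0 -> w x = n%:Z -> exists k : int, w x = k * d.
Proof.
elim/ltn_ind: n x => n IH x hx x0 wx.
have [n0|n0] := eqVneq n 0%N; first by exists 0; rewrite wx n0 mul0r.
have hd : d <= w x by apply: d_min => //; rewrite wx; lia.
have hd0 := d_gt0.
have y0 : x / lam != 0 by rewrite mulf_neq0 ?invr_neq0 ?lam0.
have wy : w (x / lam) = `|w x - d|%N.
  rewrite wdiv ?lam0 //; lia.
have hy : fx (x / lam) by apply: fxM => //; apply: fxV; exact: lam_fx.
have [|k hk] := IH _ _ _ hy y0 wy; first by lia.
by exists (k + 1); move: hk; rewrite wdiv ?lam0 //; lia.
Qed.

Lemma fx_mult x : fx x -> x != 0 -> exists k : int, w x = k * d.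
Proof.
move=> hx x0; case: (lerP 0 (w x)) => h.
  by apply: (@fx_mult_nat `|w x|%N) => //; lia.
have xi0 : x^-1 != 0 by rewrite invr_neq0.
have [|k hk] := @fx_mult_nat `|w x^-1|%N _ (fxV hx) xi0.
  rewrite wV //; lia.
by exists (- k); move: hk; rewrite wV //; lia.
Qed.

Lemma fx_vg1 x : fx x -> vg x 1 -> vg x d.
Proof.
move=> hx [->|h]; first by left.
have [->|x0] := eqVneq x 0; first by left.
have [k hk] := fx_mult hx x0; right; have := d_gt0; rewrite hk in h *; case: (lerP k 0) => ?; nia.
Qed.

Lemma fx_vg0 x : fx x -> vg x (1 - d) -> vg x 0.
Proof.
move=> hx [->|h]; first by left.
have [->|x0] := eqVneq x 0; first by left.
have [k hk] := fx_mult hx x0; right; have := d_gt0; rewrite hk in h *; case: (lerP 0 k) => ?; nia.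
Qed.

Lemma exists_pi : exists pi, pi != 0 /\ w pi = 1.
Proof. by case: Hdv. Qed.

Lemma d_cases : d = 1 \/ d = 2.
Proof.
have [pi [p0 wp]] := exists_pi.
have N0 : pi * tau pi != 0 by rewrite mulf_neq0 ?tau_neq0.
have hN : fx (pi * tau pi) by rewrite /fixedF rmorphM Hinv mulrC.
have [k hk] := fx_mult hN N0.
move: hk; rewrite wM ?tau_neq0 // wT wp => hk.
have := d_gt0 => hd0; case: (lerP k 0) => hk0; first by nia.
have : d <= 2 by nia.
lia.
Qed.


Lemma decomp beta z : tau beta != beta ->
  exists a b, [/\ fx a, fx b & z = a + b * beta].
Proof.
move=> hb; have D0 : tau beta - beta != 0 by rewrite subr_eq0.
have D0' : beta - tau beta != 0 by rewrite subr_eq0 eq_sym.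
exists ((tau beta * z - beta * tau z) / (tau beta - beta)).
exists ((tau z - z) / (tau beta - beta)); split.
- rewrite /fixedF fmorph_div !rmorphB !rmorphM !Hinv; field; by rewrite D0 D0'.
- rewrite /fixedF fmorph_div !rmorphB !Hinv; field; by rewrite D0 D0'.
- by field.
Qed.

Lemma w_min a c : a != 0 -> c != 0 -> w a != w c ->
  a + c != 0 /\ w (a + c) = Order.min (w a) (w c).
Proof.
move=> a0 c0 ne.
case: (ltgtP (w a) (w c)) ne => // h _.
  have e := w_strict a0 c0 h.
  split; last by rewrite e.
  apply/negP => /eqP s0; have ec : c = - a.
    by apply/eqP; rewrite -addr_eq0 addrC s0.
  by move: h; rewrite ec wN ltxx.
have e := w_strict c0 a0 h; rewrite addrC.
split; last by rewrite e.
apply/negP => /eqP s0; have ec : a = - c.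
  by apply/eqP; rewrite -addr_eq0 addrC s0.
by move: h; rewrite ec wN ltxx.
Qed.

Definition good (beta : L) := [/\ vg beta 0, tau beta != beta,
  (forall a b n, fx a -> fx b -> vg (a + b * beta) n -> vg a n /\ vg (b * beta) n)
 & (forall b, fx b -> vg (b * beta) 0 -> vg b 0)].

Lemma sep_of beta : beta != 0 ->
  (forall a b, fx a -> fx b -> a != 0 -> b != 0 ->
     a + b * beta != 0 /\ w (a + b * beta) = Order.min (w a) (w (b * beta))) ->
  forall a b n, fx a -> fx b -> vg (a + b * beta) n -> vg a n /\ vg (b * beta) n.
Proof.
move=> b0 H a b n ha hb.
have [->|a0] := eqVneq a 0; first by rewrite add0r => h; split => //; left.
have [->|bb0] := eqVneq b 0; first by rewrite mul0r addr0 => h; split => //; left.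
have [s0 e] := H a b ha hb a0 bb0.
case=> [/eqP|h]; first by rewrite (negbTE s0).
by move: h; rewrite e le_min => /andP [h1 h2]; split; right.
Qed.

Lemma good_pi pi : d = 2 -> pi != 0 -> w pi = 1 -> good pi.
Proof.
move=> d2 p0 wp; split.
- by right; rewrite wp.
- apply/negP => /eqP hf; have [k hk] := fx_mult hf p0.
  move: hk; rewrite wp d2; lia.
- apply: sep_of => // a b ha hb a0 b0; apply: w_min => //.
    by rewrite mulf_neq0.
  have [k hk] := fx_mult ha a0; have [k' hk'] := fx_mult hb b0.
  rewrite wM // wp hk hk' d2; apply/eqP; lia.
- move=> b hb [/eqP|h]; first by rewrite mulf_eq0 (negbTE p0) orbF => /eqP ->; left.
  have [->|b0] := eqVneq b 0; first by left.
  apply: fx_vg0 => //; right; move: h; rewrite wM // wp d2; lia.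
Qed.

Definition nonres u := vg u 0 /\ forall c, fx c -> vg c 0 -> ~ vg (u - c) 1.

Lemma all_fixed_contra :
  (forall z, vg z 0 -> tau z = z) -> False.
Proof.
move=> H; case: Hnt => x; apply/negP; rewrite negbK; apply/eqP.
case: (lerP 0 (w x)) => hx; first by apply: H; right.
have [->|x0] := eqVneq x 0; first by rewrite rmorph0.
have : tau x^-1 = x^-1 by apply: H; right; rewrite wV //; lia.
by rewrite fmorphV => /invr_inj.
Qed.

Lemma exists_nonres : d = 1 -> exists u, nonres u.
Proof.
move=> d1; case: (classic (exists u, nonres u)) => // hn; exfalso.
have H : forall z, vg z 0 -> exists c, [/\ fx c, vg c 0 & vg (z - c) 1].
  move=> z hz; apply: NNPP => hc; apply: hn; exists z; split => // c h1 h2 h3.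
  by apply: hc; exists c.
have lamO : vg lam 0 by right; rewrite d1.
have A : forall z, vg z 0 -> forall k : nat, exists s, [/\ fx s, vg s 0 & vg (z - s) k%:Z].
  move=> z hz; elim=> [|k [s [hs hs0 hzs]]]; first by exists 0; split => //;
    [exact: fx0|left|rewrite subr0].
  have lk0 : lam ^+ k != 0 by rewrite expf_neq0 ?lam0.
  have wlk : w (lam ^+ k) = k%:Z by rewrite wX ?lam0 // d1 mulr1.
  set y := (z - s) / lam ^+ k.
  have hy : vg y 0.
    case: hzs => [e|h]; first by rewrite /y e mul0r; left.
    have [e|zs0] := eqVneq (z - s) 0; first by rewrite /y e mul0r; left.
    by right; rewrite /y wdiv // wlk; lia.
  have [c [hc hc0 hyc]] := H y hy.
  exists (s + lam ^+ k * c); split.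
  - by apply: fxD => //; apply: fxM => //; apply: fxX; exact: lam_fx.
  - apply: vgeD => //; apply: vgeMO => //.
    by right; rewrite wlk.
  - have -> : z - (s + lam ^+ k * c) = lam ^+ k * (y - c).
      by rewrite /y; field.
    have -> : k.+1%:Z = k%:Z + 1 by lia.
    by apply: vgeM => //; right; rewrite wlk.
apply: all_fixed_contra => z hz; apply/eqP; rewrite eq_sym -subr_eq0; apply/eqP.
apply: vge_eq0 => N.
case: (lerP N 0) => hN.
  by apply: vge_le (vgeB hz (tauO hz)) hN.
have [s [hs hs0 hzs]] := A z hz `|N|%N.
have -> : z - tau z = (z - s) - tau (z - s) by rewrite rmorphB hs opprB addrA subrK.
apply: vge_le (vgeB hzs (iffRL (vgT _ _) hzs)) _; lia.
Qed.

Lemma good_u u : d = 1 -> nonres u -> good u.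
Proof.
move=> d1 [hu hnr].
have hu1 : ~ vg u 1 by move=> h; apply: (hnr 0 fx0 (vge0 _)); rewrite subr0.
have u0 : u != 0 by apply/negP => /eqP e; apply: hu1; left.
have wu : w u = 0.
  case: hu => [/eqP|h]; first by rewrite (negbTE u0).
  case: (lerP 1 (w u)) => h'; first by exfalso; apply: hu1; right.
  lia.
split => //.
- by apply/negP => /eqP hf; apply: (hnr u hf hu); rewrite subrr; left.
- apply: sep_of => // a b ha hb a0 b0.
  case: (lerP (w b) (w a)) => hab.
    set t := a / b.
    have ht : fx t by apply: fxM => //; apply: fxV.
    have ht0 : vg t 0 by right; rewrite /t wdiv //; lia.
    have hut : vg (u + t) 0 by apply: vgeD.
    have hnot := hnr (- t) (fxN ht) (vgeN ht0); rewrite opprK in hnot.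
    have ut0 : u + t != 0 by apply/negP => /eqP e; apply: hnot; left.
    have wut : w (u + t) = 0.
      case: hut => [/eqP|h]; first by rewrite (negbTE ut0).
      case: (lerP 1 (w (u + t))) => h'; first by exfalso; apply: hnot; right.
      lia.
    have e : a + b * u = b * (u + t) by rewrite /t; field.
    rewrite e mulf_neq0 // wM // wut addr0 wM // wu addr0.
    by split => //; rewrite min_r.
  apply: w_min => //; first by rewrite mulf_neq0.
  by rewrite wM // wu addr0; apply/eqP; lia.
- by move=> b hb; rewrite mulrC => /(vge_unitM _ _ u0 wu).
Qed.


Lemma Cn_div n x y : Cn w tau lam n x -> Cn w tau lam n y ->
  (Cn w tau lam n.+1 (x / y) <-> vg (x - y) (n.+1%:Z * d)).
Proof.
move=> [x0 wx nx hx] [y0 wy ny hy].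
have [yi0 wyi] := unitV y0 wy.
have e : x / y - 1 = y^-1 * (x - y) by rewrite mulrBr mulVf // mulrC.
split=> [[_ _ _]|h]; first by rewrite e vge_unitM.
split.
- by rewrite mulf_neq0.
- by rewrite wdiv // wx wy subrr.
- by rewrite fmorph_div mulf_div nx ny divr1.
- by rewrite e vge_unitM.
Qed.

Lemma vg_scale z n M : vg (z / lam ^+ n) M <-> vg z (M + n%:Z * d).
Proof.
have l0 : lam ^+ n != 0 by rewrite expf_neq0 ?lam0.
have wl : w (lam ^+ n) = n%:Z * d by rewrite wX ?lam0.
have [->|z0] := eqVneq z 0; first by rewrite mul0r; split => _; left.
have zl0 : z / lam ^+ n != 0 by rewrite mulf_neq0 ?invr_neq0.
split=> [[e|h]|[e|h]].
- by move: zl0; rewrite e eqxx.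
- by right; move: h; rewrite wdiv // wl; lia.
- by move: z0; rewrite e eqxx.
- by right; rewrite wdiv // wl; lia.
Qed.

Lemma two0 : (2%:R : L) != 0. Proof. exact: Hchar. Qed.

Lemma w2 : ell != 2%N -> w 2%:R = 0.
Proof.
move=> h2; have ho : odd ell by case: (even_prime Hp) => // e; move: h2; rewrite e.
have e : (ell * 1).+1 = (2 * (ell./2).+1)%N.
  by rewrite muln1 -{1}(odd_double_half ell) ho /=; lia.
have k0' : ((ell./2).+1%:R : L) != 0 by exact: Hchar.
have := w_lin 1; rewrite e natrM wM ?two0 //.
have k0 : 0 <= w ((ell./2).+1%:R : L).
  by case: (vge_nat (ell./2).+1) => [/eqP|//]; rewrite (negbTE k0').
have t0 : 0 <= w (2%:R : L).
  by case: (vge_nat 2) => [/eqP|//]; rewrite (negbTE two0).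
move=> hs; apply/eqP; rewrite eq_le t0 andbT.
have -> : w (2%:R : L) = - w ((ell./2).+1%:R : L) by apply/eqP; rewrite -addr_eq0 hs.
by rewrite oppr_le0.
Qed.

Lemma notm_unit z : vg z 0 -> ~ vg z 1 -> z != 0 /\ w z = 0.
Proof.
move=> [->|h] h1; first by exfalso; apply: h1; left.
have z0 : z != 0 by apply/negP => /eqP e; apply: h1; left.
split => //; case: (lerP 1 (w z)) => h'; first by exfalso; apply: h1; right.
lia.
Qed.

Lemma prod_m u v : vg u 0 -> vg v 0 -> vg (u * v) 1 -> vg u 1 \/ vg v 1.
Proof.
move=> hu hv h; apply: NNPP => hn.
have hu1 : ~ vg u 1 by move=> x; apply: hn; left.
have hv1 : ~ vg v 1 by move=> x; apply: hn; right.
have [u0 wu] := notm_unit hu hu1; have [v0 wv] := notm_unit hv hv1.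
case: h => [/eqP|h]; first by rewrite mulf_eq0 (negbTE u0) (negbTE v0).
by move: h; rewrite wM // wu wv.
Qed.

Section Reps.
Variable r : 'I_(ell ^ f) -> L.
Hypothesis hrA : forall i, fx (r i) /\ vg (r i) 0.
Hypothesis hrE : forall i j, vg (r i - r j) 1 -> i = j.
Hypothesis hrC : forall a, fx a /\ vg a 0 -> exists i, vg (a - r i) 1.
Variable beta : L.
Hypothesis hg : good beta.

Lemma q_gt0 : (0 < ell ^ f)%N.
Proof. by rewrite expn_gt0 prime_gt0. Qed.

Definition i0 : 'I_(ell ^ f) := Ordinal q_gt0.
Definition P := ('I_(ell ^ f) * 'I_(ell ^ f))%type.
Definition cp (p : P) := r p.1 + r p.2 * beta.

Lemma beta_nz : beta != 0.
Proof. by apply/negP => /eqP b0; case: hg => _; rewrite b0 rmorph0 eqxx. Qed.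

Lemma beta_O : vg beta 0. Proof. by case: hg. Qed.
Lemma beta_nf : tau beta != beta. Proof. by case: hg. Qed.
Lemma sepb a b n : fx a -> fx b -> vg (a + b * beta) n -> vg a n /\ vg (b * beta) n.
Proof. by case: hg => _ _ H _; apply: H. Qed.
Lemma divb b : fx b -> vg (b * beta) 0 -> vg b 0.
Proof. by case: hg => _ _ _ H; apply: H. Qed.

Lemma divbd b : fx b -> vg (b * beta) d -> vg b 1.
Proof.
move=> hb h.
have h' : vg (b / lam) 0.
  apply: divb; first by apply: fxM => //; apply: fxV; exact: lam_fx.
  have -> : b / lam * beta = (b * beta) / lam ^+ 1 by rewrite expr1 mulrAC.
  by apply/vg_scale; rewrite add0r mul1r.
have -> : b = (b / lam ^+ 1) * lam ^+ 1 by rewrite divfK // expf_neq0 ?lam0.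
rewrite expr1 in h' *; apply: vge_le (vgeM h' (_ : vg lam d)) _.
  by right.
have := d_gt0; lia.
Qed.

Lemma cp_O p : vg (cp p) 0.
Proof.
apply: vgeD; first by case: (hrA p.1).
by apply: vgeMO; [case: (hrA p.2)|exact: beta_O].
Qed.


Lemma R1 z : vg z 0 -> exists p : P, vg (z - cp p) d.
Proof.
move=> hz; have [a [b [ha hb e]]] := decomp z beta_nf.
have hz' : vg (a + b * beta) 0 by rewrite -e.
have [ha0 hbb0] := sepb ha hb hz'.
have hb0 := divb hb hbb0.
have [i hi] := hrC (conj ha ha0); have [j hj] := hrC (conj hb hb0).
exists (i, j); rewrite /cp /= e.
have -> : a + b * beta - (r i + r j * beta) = (a - r i) + (b - r j) * beta by ring.
have [fi _] := hrA i; have [fj _] := hrA j.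
apply: vgeD; first by apply: fx_vg1 => //; apply: fxB.
apply: (@vgeMl _ _ _ 0) => //; last exact: beta_O.
by apply: fx_vg1 => //; apply: fxB.
Qed.

Lemma R2 p p' : vg (cp p - cp p') d -> p = p'.
Proof.
case: p p' => i j [i' j'] /=; rewrite /cp /=.
have [fi _] := hrA i; have [fj _] := hrA j.
have [fi' _] := hrA i'; have [fj' _] := hrA j'.
have -> : r i + r j * beta - (r i' + r j' * beta) = (r i - r i') + (r j - r j') * beta by ring.
move=> h; have [h1 h2] := sepb (fxB fi fi') (fxB fj fj') h.
have e1 := hrE (vge_le h1 (ltac:(have := d_gt0; lia) : 1 <= d)).
have e2 := hrE (divbd (fxB fj fj') h2).
by rewrite e1 e2.
Qed.

Definition pr (z : L) : P :=
  epsilon (inhabits (i0, i0)) (fun p => vg (z - cp p) d).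

Lemma prP z : vg z 0 -> vg (z - cp (pr z)) d.
Proof. by move=> hz; rewrite /pr; apply: (epsilon_spec (inhabits (i0, i0)) (fun p => vg (z - cp p) d)); apply: R1. Qed.

Lemma prU z p : vg z 0 -> vg (z - cp p) d -> pr z = p.
Proof.
move=> hz h; apply: R2.
have -> : cp (pr z) - cp p = (z - cp p) - (z - cp (pr z)) by ring.
by apply: vgeB => //; apply: prP.
Qed.

Lemma pr_eq z z' : vg z 0 -> vg z' 0 -> (vg (z - z') d <-> pr z = pr z').
Proof.
move=> hz hz'; split=> [h|e].
  apply/esym/prU => //.
  have -> : z' - cp (pr z) = (z - cp (pr z)) - (z - z') by ring.
  by apply: vgeB => //; apply: prP.
have -> : z - z' = (z - cp (pr z)) - (z' - cp (pr z')) by rewrite e; ring.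
by apply: vgeB; apply: prP.
Qed.

Lemma count_general n : exists k, Cquot_card w tau lam n k /\ (k <= ell ^ f * ell ^ f)%N.
Proof.
have HE : forall x y, Cn w tau lam n x -> Cn w tau lam n y ->
    (Cn w tau lam n.+1 (x / y) <-> pr ((x - 1) / lam ^+ n) = pr ((y - 1) / lam ^+ n)).
  move=> x y hx hy; rewrite Cn_div //.
  have gx : vg ((x - 1) / lam ^+ n) 0.
    by apply/vg_scale; rewrite add0r; case: hx.
  have gy : vg ((y - 1) / lam ^+ n) 0.
    by apply/vg_scale; rewrite add0r; case: hy.
  rewrite -pr_eq //.
  have -> : (x - 1) / lam ^+ n - (y - 1) / lam ^+ n = (x - y) / lam ^+ n by ring.
  rewrite vg_scale.
  have -> : d + n%:Z * d = n.+1%:Z * d by lia.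
  by [].
have [k [hk hk']] := classes_bound HE.
by exists k; split => //; move: hk'; rewrite card_prod card_ord.
Qed.

Lemma HE0 x y : Cn w tau lam 0 x -> Cn w tau lam 0 y ->
  (Cn w tau lam 1 (x / y) <-> pr x = pr y).
Proof.
move=> hx hy; rewrite Cn_div // mul1r.
have gx : vg x 0 by case: hx => x0 wx _ _; right; rewrite wx.
have gy : vg y 0 by case: hy => y0 wy _ _; right; rewrite wy.
exact: pr_eq.
Qed.

Lemma Cn0_O x : Cn w tau lam 0 x -> vg x 0.
Proof. by case=> x0 wx _ _; right; rewrite wx. Qed.

Lemma fx_r i : fx (r i). Proof. by case: (hrA i). Qed.
Lemma O_r i : vg (r i) 0. Proof. by case: (hrA i). Qed.

Section Ram.
Hypotheses (Hodd : ell != 2%N) (d2 : d = 2) (tb : tau beta = - beta) (wb : w beta = 1).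

Lemma tau_cp p : tau (cp p) = r p.1 - r p.2 * beta.
Proof. by rewrite /cp rmorphD rmorphM !fx_r tb mulrN. Qed.

Lemma count_ram : Cquot_card w tau lam 0 (2 * ell ^ f).
Proof.
have w20 := w2 Hodd.
have [ip hip] := hrC (conj fx1 vge1).
have [im him] := hrC (conj (fxN fx1) (vgeN vge1)).
have nipm : ip != im.
  apply/negP => /eqP e; rewrite -e in him.
  have : vg 2%:R 1.
    have -> : (2%:R : L) = (1 - r ip) - (-1 - r ip) by ring.
    exact: vgeB.
  by case=> [/eqP|]; [rewrite (negbTE two0)|rewrite w20].
have -> : (2 * ell ^ f)%N = #|setX [set ip; im] [set: 'I_(ell ^ f)]|.
  by rewrite cardsX cards2 nipm cardsT card_ord.
apply: (@classes_count _ _ _ _ pr).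
- exact: HE0.
- move=> x hx; have hx0 := Cn0_O hx.
  case: hx => x0 wx nx _.
  have hp := prP hx0; rewrite d2 in hp.
  case e : (pr x) hp => [i j] hp.
  rewrite !inE /= andbT.
  have hpt : vg (tau x - tau (cp (i, j))) 2 by rewrite -rmorphB; apply/vgT.
  rewrite tau_cp /= in hpt.
  have hcpO : vg (r i - r j * beta) 0.
    by apply: vgeB; [exact: O_r|apply: vgeMO; [exact: O_r|exact: beta_O]].
  have h1 : vg (x * tau x - cp (i, j) * (r i - r j * beta)) 2.
    have -> : x * tau x - cp (i, j) * (r i - r j * beta) =
      x * (tau x - (r i - r j * beta)) + (x - cp (i, j)) * (r i - r j * beta) by ring.
    apply: vgeD; first by apply: (@vgeMr _ _ _ 0).
    by apply: (@vgeMl _ _ _ 0).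
  rewrite nx /cp /= in h1.
  have hb2 : vg (r j ^+ 2 * beta ^+ 2) 2.
    apply: (@vgeMr _ _ _ 0) => //; first by rewrite expr2; apply: vgeMO; exact: O_r.
    by right; rewrite wX ?beta_nz // wb.
  have h3 : vg ((1 - r i) * (1 + r i)) 1.
    have -> : (1 - r i) * (1 + r i) =
       (1 - (r i + r j * beta) * (r i - r j * beta)) - r j ^+ 2 * beta ^+ 2 by ring.
    by apply: vge_le (vgeB h1 hb2) _.
  have O1 : vg (1 - r i) 0 by apply: vgeB; [exact: vge1|exact: O_r].
  have O2 : vg (1 + r i) 0 by apply: vgeD; [exact: vge1|exact: O_r].
  case: (prod_m O1 O2 h3) => h.
    apply/orP; left; apply/eqP; apply: hrE.
    have -> : r i - r ip = (1 - r ip) - (1 - r i) by ring.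
    exact: vgeB.
  apply/orP; right; apply/eqP; apply: hrE.
  have -> : r i - r im = (-1 - r im) + (1 + r i) by ring.
  exact: vgeD.
- move=> [i j]; rewrite !inE /= andbT => hi.
  pose sg : L := if i == ip then 1 else -1.
  have sgf : fx sg by rewrite /sg; case: ifP => _; [exact: fx1|exact: (fxN fx1)].
  have sg0 : sg != 0 by rewrite /sg; case: ifP => _; rewrite ?oppr_eq0 oner_eq0.
  have wsg : w sg = 0 by rewrite /sg; case: ifP => _; [exact: w1|exact: wN1].
  have sgsg : sg * sg = 1 by rewrite /sg; case: ifP => _; rewrite ?mulrNN mulr1.
  have hsg : vg (sg - r i) 1.
    rewrite /sg; case: ifP => [/eqP ->//|/negbT h].
    by have := hi; rewrite (negbTE h) /= => /eqP ->.
  have s20 : 2%:R * sg != 0 by rewrite mulf_neq0 ?two0.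
  pose t := r j / (2%:R * sg).
  have tf : fx t by apply: fxM; [exact: fx_r|apply: fxV; apply: fxM => //; exact: fx_nat].
  have tO : vg t 0.
    apply: (@vgeMl _ _ _ 0) => //; first exact: O_r.
    by right; rewrite wV // wM ?two0 // w20 wsg.
  have tb1 : vg (t * beta) 1.
    have hb1 : vg beta 1 by right; rewrite wb.
    by have := vgeM tO hb1; rewrite add0r.
  have [u10 wu1] := unit1 tb1.
  have [u20 wu2] := unit1 (vgeN tb1).
  pose x := sg * (1 + t * beta) / (1 + - (t * beta)).
  have x0 : x != 0 by rewrite /x !mulf_neq0 ?invr_neq0.
  have wx : w x = 0 by rewrite /x wdiv ?mulf_neq0 // wM // wsg wu1 wu2.
  have taux : tau x = sg * (1 - t * beta) / (1 + t * beta).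
    by rewrite /x fmorph_div !rmorphM !rmorphD rmorphN rmorph1 rmorphM sgf tf tb; congr (_ / _); ring.
  exists x; split.
    split => //.
      rewrite taux; have -> : x * (sg * (1 - t * beta) / (1 + t * beta)) = sg * sg.
        by rewrite /x; field; rewrite u10 u20.
      exact: sgsg.
    by rewrite mul0r; apply: vgeB; [right; rewrite wx|exact: vge1].
  apply: prU; first by right; rewrite wx.
  rewrite /cp /=.
  have -> : x - (r i + r j * beta) =
     (sg - r i) + (t * beta) ^+ 2 * (2%:R * sg / (1 + - (t * beta))).
    have e2 : 2%:R * sg - r j * beta = 2%:R * sg * (1 + - (t * beta)).
      by rewrite /t; field; rewrite sg0 two0.
    by rewrite /x /t; field; rewrite sg0 two0 e2 mulf_neq0.
  apply: vgeD; first by apply: fx_vg1 => //; apply: fxB => //; exact: fx_r.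
  rewrite d2; apply: (@vgeMl _ _ _ 0) => //.
    by rewrite expr2; apply: vge_le (vgeM tb1 tb1) _.
  apply: vgeMO; first by apply: vgeMO => //; [exact: vge_nat|right; rewrite wsg].
  by right; rewrite wV // wu2.
Qed.

End Ram.

Section Unram.
Hypotheses (Hodd : ell != 2%N) (d1 : d = 1) (hnr : nonres beta).

Lemma uu : ~ vg (beta - tau beta) 1.
Proof.
move=> h; case: hnr => hb H.
have w20 := w2 Hodd.
have [i20 wi2] := unitV two0 w20.
have hc : fx ((beta + tau beta) / 2%:R).
  by rewrite /fixedF fmorph_div rmorphD Hinv rmorph_nat addrC.
apply: (H _ hc).
  apply: (@vgeMl _ _ _ 0) => //; first by apply: vgeD => //; apply: tauO.
  by right; rewrite wi2.
have -> : beta - (beta + tau beta) / 2%:R = (beta - tau beta) * (2%:R)^-1.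
  by field; rewrite two0.
by apply: (@vgeMl _ _ _ 0) => //; right; rewrite wi2.
Qed.

Lemma cp_unit p : p != pr 0 -> cp p != 0 /\ w (cp p) = 0.
Proof.
move=> hp; apply: notm_unit; first exact: cp_O.
move=> h; move/negP: hp; apply; apply/eqP.
have e1 : pr (cp p) = p by apply: prU; [exact: cp_O|rewrite subrr; left].
rewrite -e1; apply/pr_eq; [exact: cp_O|exact: vge0|by rewrite subr0 d1].
Qed.

Lemma unitO y : w y = 0 -> vg y 0.
Proof. by move=> wy; right; rewrite wy. Qed.

Lemma ratio_unit y : y != 0 -> w y = 0 -> y / tau y != 0 /\ w (y / tau y) = 0.
Proof.
move=> y0 wy; have ty0 := tau_neq0 y0.
by rewrite mulf_neq0 ?invr_neq0 // wdiv // wT subrr.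
Qed.

Lemma ratio_C y : y != 0 -> w y = 0 -> Cn w tau lam 0 (y / tau y).
Proof.
move=> y0 wy; have [r0 wr] := ratio_unit y0 wy; have ty0 := tau_neq0 y0.
split => //.
  by rewrite fmorph_div Hinv; field; rewrite y0 ty0.
by rewrite mul0r; apply: vgeB; [exact: unitO|exact: vge1].
Qed.

Lemma ratio_cong y y' : y != 0 -> w y = 0 -> y' != 0 -> w y' = 0 ->
  vg (y - y') 1 -> vg (y / tau y - y' / tau y') 1.
Proof.
move=> y0 wy y'0 wy' h.
have ty0 := tau_neq0 y0; have ty'0 := tau_neq0 y'0.
have e : y / tau y - y' / tau y' =
  (y * (tau y' - tau y) + (y - y') * tau y) * (tau y * tau y')^-1.
  by field; rewrite ty0 ty'0.
rewrite e; apply: (@vgeMl _ _ _ 0) => //.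
  apply: vgeD.
    apply: (@vgeMr _ _ _ 0) => //; first exact: unitO.
    by rewrite -rmorphB; apply/vgT; rewrite -opprB; apply: vgeN.
  by apply: (@vgeMl _ _ _ 0) => //; apply: unitO; rewrite wT.
have p0 : tau y * tau y' != 0 by rewrite mulf_neq0.
by right; rewrite wV // wM // !wT wy wy'.
Qed.

Lemma hilb z x : x * tau x = 1 -> x * tau (z + x * tau z) = z + x * tau z.
Proof. by move=> nx; rewrite rmorphD rmorphM Hinv mulrDr mulrA nx mul1r addrC. Qed.

Lemma hilbert x : Cn w tau lam 0 x -> exists y, [/\ y != 0, w y = 0 & x = y / tau y].
Proof.
move=> hx; have hx0 := Cn0_O hx; case: hx => x0 wx nx _.
have [y [hy hy1 e]] : exists y, [/\ vg y 0, ~ vg y 1 & x * tau y = y].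
  case: (classic (vg (1 + x) 1)) => h.
    exists (beta + x * tau beta); split.
    - by apply: vgeD; [exact: beta_O|apply: vgeMO => //; apply: tauO; exact: beta_O].
    - move=> h2; apply: uu.
      have -> : beta - tau beta = (beta + x * tau beta) - (1 + x) * tau beta by ring.
      apply: vgeB => //; apply: (@vgeMl _ _ _ 0) => //.
      by apply: tauO; exact: beta_O.
    - exact: hilb.
  exists (1 + x); split => //.
  - by apply: vgeD => //; exact: vge1.
  - have := hilb 1 nx; by rewrite rmorph1 mulr1.
have [y0 wy] := notm_unit hy hy1.
exists y; split => //.
by rewrite -{1}e mulfK // tau_neq0.
Qed.

Definition Pstar : {set P} := [set~ pr 0].
Definition phi (p : P) := pr (cp p / tau (cp p)).

Lemma count_unram : Cquot_card w tau lam 0 (ell ^ f + 1).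
Proof.
have [iz hiz] := hrC (conj fx0 (vge0 0)).
have [ip hip] := hrC (conj fx1 vge1).
have nipz : ip != iz.
  apply/negP => /eqP e; rewrite e in hip.
  have : vg 1 1.
    have -> : (1 : L) = (1 - r iz) - (0 - r iz) by ring.
    exact: vgeB.
  by case=> [/eqP|]; rewrite ?oner_eq0 // w1.
have q2 : (2 <= ell ^ f)%N.
  have := ltn_ord ip; have := ltn_ord iz.
  case: (leqP 2 (ell ^ f)) => // h.
  move: nipz; rewrite -val_eqE /=; lia.
have r_unit i : i != iz -> r i != 0 /\ w (r i) = 0.
  move=> hi; apply: notm_unit; first exact: O_r.
  move=> h; move/negP: hi; apply; apply/eqP; apply: hrE.
  have -> : r i - r iz = (0 - r iz) + r i by ring.
  exact: vgeD.
have HS : forall x, Cn w tau lam 0 x -> pr x \in phi @: Pstar.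
  move=> x hx; have [y [y0 wy e]] := hilbert hx.
  have hy : vg y 0 := unitO wy.
  have pP : pr y \in Pstar.
    rewrite !inE; apply/negP => /eqP h.
    move/(pr_eq hy (vge0 0)): h; rewrite subr0 d1 => h.
    by case: h => [/eqP|]; rewrite ?(negbTE y0) // wy.
  apply/imsetP; exists (pr y) => //.
  have [c0 wc] := @cp_unit (pr y) (ltac:(by move: pP; rewrite !inE)).
  rewrite /phi; apply/pr_eq.
  - by rewrite e; apply: unitO; case: (ratio_unit y0 wy).
  - by apply: unitO; case: (ratio_unit c0 wc).
  - rewrite e d1; apply: ratio_cong => //.
    by have := prP hy; rewrite d1.
have Hsurj : forall s, s \in phi @: Pstar -> exists a, Cn w tau lam 0 a /\ pr a = s.
  move=> s /imsetP [p pP ->].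
  have [c0 wc] := @cp_unit p (ltac:(by move: pP; rewrite !inE)).
  by exists (cp p / tau (cp p)); split => //; apply: ratio_C.
have fiber : forall p', p' \in Pstar ->
    #|[set p | (p \in Pstar) && (phi p == phi p')]| = (ell ^ f).-1.
  move=> p' pP'.
  have [c0' wc'] := @cp_unit p' (ltac:(by move: pP'; rewrite !inE)).
  have hc' : vg (cp p') 0 := unitO wc'.
  have inj : {in [set~ iz] &, injective (fun i => pr (r i * cp p'))}.
    move=> i j hi hj /= e.
    have hi' : vg (r i * cp p') 0 by apply: vgeMO => //; exact: O_r.
    have hj' : vg (r j * cp p') 0 by apply: vgeMO => //; exact: O_r.
    move/(pr_eq hi' hj'): e; rewrite d1 -mulrBl mulrC => /(vge_unitM _ _ c0' wc').
    exact: hrE.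
  rewrite -[in RHS](card_ord (ell ^ f)) -(cardsC1 iz) -(card_in_imset inj).
  apply: eq_card => p; rewrite inE /=.
  apply/idP/idP.
  - move=> /andP [pP /eqP hph].
    have [c0 wc] := @cp_unit p (ltac:(by move: pP; rewrite !inE)).
    set c := cp p in c0 wc hph *; set c' := cp p' in c0' wc' hc' hph *.
    have hr : vg (c / tau c - c' / tau c') 1.
      rewrite -d1; apply/pr_eq => //.
      + by apply: unitO; case: (ratio_unit c0 wc).
      + by apply: unitO; case: (ratio_unit c0' wc').
    pose t := c / c'.
    have t0 : t != 0 by rewrite mulf_neq0 ?invr_neq0.
    have wt : w t = 0 by rewrite /t wdiv // wc wc'.
    have htt : vg (t - tau t) 1.
      have -> : t - tau t = (c / tau c - c' / tau c') * (tau c / c').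
        by rewrite /t fmorph_div; field; rewrite c0' !tau_neq0.
      apply: (@vgeMl _ _ _ 0) => //; apply: unitO.
      by rewrite wdiv ?tau_neq0 // wT wc wc'.
    have [a [b [ha hb et]]] := decomp t beta_nf.
    have htO : vg (a + b * beta) 0 by rewrite -et; exact: unitO.
    have [ha0 hbb] := sepb ha hb htO.
    have hb0 := divb hb hbb.
    have hb1 : vg b 1.
      have e1 : t - tau t = b * (beta - tau beta).
        by rewrite et rmorphD rmorphM ha hb; ring.
      rewrite e1 in htt; apply: NNPP => hn.
      have [bz wbz] := notm_unit hb0 hn.
      by apply: uu; move: htt => /(vge_unitM _ _ bz wbz).
    have [i hi] := hrC (conj ha ha0).
    have hti : vg (t - r i) 1.
      have -> : t - r i = (a - r i) + b * beta by rewrite et; ring.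
      apply: vgeD => //; apply: (@vgeMl _ _ _ 0) => //; exact: beta_O.
    have hci : vg (c - r i * c') 1.
      have -> : c - r i * c' = (t - r i) * c' by rewrite /t mulrBl divfK.
      exact: (@vgeMl _ _ _ 0).
    apply/imsetP; exists i.
      rewrite !inE; apply/negP => /eqP ei; rewrite ei in hci.
      have : vg c 1.
        have -> : c = (c - r iz * c') + r iz * c' by rewrite subrK.
        apply: vgeD => //; apply: (@vgeMl _ _ _ 0) => //.
        by rewrite -[r iz]opprK -[X in - X]add0r; apply: vgeN.
      by case=> [/eqP|]; rewrite ?(negbTE c0) // wc.
    apply/esym/prU; first by apply: vgeMO => //; exact: O_r.
    by rewrite d1 -opprB; apply: vgeN.
  - move=> /imsetP [i hi ->].
    have [ri0 wri] := r_unit i (ltac:(by move: hi; rewrite !inE)).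
    have hz : vg (r i * cp p') 0 by apply: vgeMO => //; exact: O_r.
    have z0 : r i * cp p' != 0 by rewrite mulf_neq0.
    have wz : w (r i * cp p') = 0 by rewrite wM // wri wc'.
    have hp := prP hz; rewrite d1 in hp.
    have pP : pr (r i * cp p') \in Pstar.
      rewrite !inE; apply/negP => /eqP h.
      have : vg (r i * cp p') 1.
        have -> : r i * cp p' = (r i * cp p' - cp (pr 0)) + cp (pr 0) by rewrite subrK.
        apply: vgeD; first by rewrite -h.
        by have := prP (vge0 0); rewrite d1 sub0r => /vgeN; rewrite opprK.
      by case=> [/eqP|]; rewrite ?(negbTE z0) // wz.
    rewrite pP /=; apply/eqP.
    have [c0 wc] := @cp_unit (pr (r i * cp p')) (ltac:(by move: pP; rewrite !inE)).
    rewrite /phi; apply/pr_eq.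
    + by apply: unitO; case: (ratio_unit c0 wc).
    + by apply: unitO; case: (ratio_unit c0' wc').
    rewrite d1.
    have -> : cp p' / tau (cp p') = (r i * cp p') / tau (r i * cp p').
      by rewrite rmorphM fx_r; field; rewrite ri0 tau_neq0.
    apply: ratio_cong => //.
    by rewrite -opprB; apply: vgeN.
have hcard : (#|phi @: Pstar| * (ell ^ f).-1 = (ell ^ f * ell ^ f).-1)%N.
  have e1 : #|Pstar| = (ell ^ f * ell ^ f).-1 by rewrite cardsC1 card_prod card_ord.
  have e2 : #|Pstar| = \sum_(s in phi @: Pstar) (ell ^ f).-1.
    rewrite -sum1_card (partition_big_imset phi) /=.
    apply: eq_bigr => s /imsetP [p' pP' ->].
    by rewrite sum1dep_card fiber.
  by rewrite -e1 e2 sum_nat_const.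
have -> : (ell ^ f + 1)%N = #|phi @: Pstar|.
  move: hcard q2; set q := (ell ^ f)%N; set k := #|_|; nia.
apply: (@classes_count _ _ _ _ pr).
- exact: HE0.
- exact: HS.
- exact: Hsurj.
Qed.

End Unram.

End Reps.


Lemma exists_good : exists beta, good beta.
Proof.
case: d_cases => hd.
  by have [u hu] := exists_nonres hd; exists u; apply: good_u.
by have [pi [p0 wp]] := exists_pi; exists pi; apply: good_pi.
Qed.

Lemma exists_anti : ell != 2%N -> d = 2 -> exists beta, [/\ good beta, tau beta = - beta & w beta = 1].
Proof.
move=> Hodd d2; have [pi [p0 wp]] := exists_pi.
have w20 := w2 Hodd.
have hs : vg (pi + tau pi) 2.
  rewrite -d2; apply: fx_vg1.
    by rewrite /fixedF rmorphD Hinv addrC.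
  apply: vgeD; first by right; rewrite wp.
  by apply/vgT; right; rewrite wp.
have tp0 : 2%:R * pi != 0 by rewrite mulf_neq0 ?two0.
have w2p : w (2%:R * pi) = 1 by rewrite wM ?two0 // w20 wp.
have [b0 wb] : (2%:R * pi + - (pi + tau pi)) != 0 /\ w (2%:R * pi + - (pi + tau pi)) = 1.
  have [e|s0] := eqVneq (pi + tau pi) 0.
    by rewrite e oppr0 addr0 tp0 w2p.
  have ns0 : - (pi + tau pi) != 0 by rewrite oppr_eq0.
  case: hs => [/eqP|hs]; first by rewrite (negbTE s0).
  have [h1 h2] := @w_min (2%:R * pi) (- (pi + tau pi)) tp0 ns0 (ltac:(rewrite wN w2p; apply/eqP; lia)).
  by rewrite h1 h2 wN w2p min_l //; lia.
have e : 2%:R * pi + - (pi + tau pi) = pi - tau pi by ring.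
rewrite e in b0 wb.
exists (pi - tau pi); split => //.
- exact: good_pi.
- by rewrite rmorphB Hinv opprB.
Qed.

Lemma main_result :
  [/\ (ell != 2)%N -> 1 < w lam -> Cquot_card w tau lam 0 (2 * ell ^ f),
      (ell != 2)%N -> w lam = 1 -> Cquot_card w tau lam 0 (ell ^ f + 1)
    & ell = 2%N -> forall n : nat, n%:Z * w lam <= w 2%:R ->
        exists k : nat, Cquot_card w tau lam n k /\ (k <= 4 ^ f)%N].
Proof.
have [r [hrA hrE hrC]] := Hf.
split.
- move=> Hodd hd; have d2 : d = 2 by case: d_cases => h; [lia|].
  have [beta [hg tb wb]] := exists_anti Hodd d2.
  exact: (count_ram hrA hrE hrC hg Hodd d2 tb wb).
- move=> Hodd d1; have [u hu] := exists_nonres d1.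
  exact: (count_unram hrA hrE hrC (good_u d1 hu) Hodd d1 hu).
- move=> e2 n _; have [beta hg] := exists_good.
  have [k [hk hk']] := count_general hrA hrE hrC hg n.
  by exists k; split => //; move: hk'; rewrite e2 -expnMn.
Qed.

End Main.

Unset Implicit Arguments.

Theorem lemma6p3 (ell : nat) (L : fieldType) (w : L -> int)
    (tau : {rmorphism L -> L}) (lam : L) (f : nat) :
  prime ell ->
  finite_ext_Ql w ell ->
  involutive tau -> (exists x : L, tau x != x) ->
  uniformizer_fixed w tau lam ->
  inertia_deg_fixed w tau ell f ->
  [/\ (ell != 2)%N -> 1 < w lam ->                   (* L/L^tau ramified *)
        Cquot_card w tau lam 0 (2 * ell ^ f),
      (ell != 2)%N -> w lam = 1 ->                   (* L/L^tau unramified *)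
        Cquot_card w tau lam 0 (ell ^ f + 1)
    & ell = 2%N -> forall n : nat, n%:Z * w lam <= w 2%:R ->  (* n <= v_lam(2) *)
        exists k : nat, Cquot_card w tau lam n k /\ (k <= 4 ^ f)%N].
Proof.
move=> Hp [Hdv Hcomp Hchar Hell _] Hinv Hnt Hu Hf.
exact: (main_result Hp Hdv Hcomp Hchar Hell Hinv Hnt Hu Hf).
Qed.
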